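(* Let $(\Omega,\mathcal{F},\mathbb{P})$ be a probability space, $k$ a positive integer, $\mathcal{S}$ a $k$-semiring on $\Omega$ with $\mathcal{S}\subseteq\mathcal{F}$, and $f\in L_1(\Omega,\mathcal{F},\mathbb{P})$. Then: (a) $\|f\|_{\mathcal{S}}\le\|f\|_{L_1}$. (b) If $\mathcal{B}$ is a $\sigma$-algebra on $\Omega$ with $\mathcal{B}\subseteq\mathcal{S}$, then $\|\mathbb{E}(f\mid\mathcal{B})\|_{\mathcal{S}}\le\|f\|_{\mathcal{S}}$. (c) If $\mathcal{S}$ is a $\sigma$-algebra, then $\|f\|_{\mathcal{S}}\le\|\mathbb{E}(f\mid\mathcal{S})\|_{L_1}\le 2\|f\|_{\mathcal{S}}$.
   Context: A collection $\mathcal{S}$ of subsets of a nonempty set $\Omega$ is a $k$-semiring on $\Omega$ if: $\emptyset,\Omega\in\mathcal{S}$; $S\cap T\in\mathcal{S}$ for $S,T\in\mathcal{S}$; for $S,T\in\mathcal{S}$ there exist $\ell\in\{1,\dots,k\}$ and pairwise disjoint $R_1,\dots,R_\ell\in\mathcal{S}$ with $S\setminus T=R_1\cup\dots\cup R_\ell$. The $\mathcal{S}$-uniformity norm is $\|f\|_{\mathcal{S}}=\sup\{|\int_S f\,d\mathbb{P}|:S\in\mathcal{S}\}$. *)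

(* Defs.v *)
From HB Require Import structures.
From mathcomp Require Import all_boot all_order all_algebra.
From mathcomp Require Import all_classical all_reals all_analysis.
Set Implicit Arguments. Unset Strict Implicit. Unset Printing Implicit Defensive.
Import Order.TTheory GRing.Theory Num.Theory.
Local Open Scope classical_set_scope.
Local Open Scope ring_scope.

Definition k_semiring (T : Type) (S : set (set T)) (k : nat) : Prop :=
  [/\ S set0, S setT,
      (forall A B, S A -> S B -> S (A `&` B)) &
      (forall A B, S A -> S B ->
         exists l : nat, exists Rs : nat -> set T,
           [/\ (1 <= l)%N, (l <= k)%N,
               (forall i, (i < l)%N -> S (Rs i)),
               trivIset [set i | (i < l)%N] Rs &
               A `\` B = \bigcup_(i < l) Rs i])].

Definition S_norm d (T : measurableType d) (R : realType)
  (P : probability T R) (S : set (set T)) (f : T -> R) : \bar R :=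
  ereal_sup [set `| \int[P]_(x in A) (f x)%:E |%E | A in S].

Definition L1_norm d (T : measurableType d) (R : realType)
  (P : probability T R) (f : T -> R) : \bar R :=
  (\int[P]_x `|(f x)%:E|)%E.

Definition measurable_wrt d (T : measurableType d) (R : realType)
  (B : set (set T)) (g : T -> R) : Prop :=
  forall Y : set R, measurable Y -> B (g @^-1` Y).

Definition is_cond_exp d (T : measurableType d) (R : realType)
  (P : probability T R) (B : set (set T)) (f g : T -> R) : Prop :=
  [/\ measurable_wrt B g,
      P.-integrable setT (EFin \o g) &
      forall A, B A -> (\int[P]_(x in A) (g x)%:E = \int[P]_(x in A) (f x)%:E)%E].

(* Main.v *)
Require Import Defs.
From HB Require Import structures.
From mathcomp Require Import all_boot all_order all_algebra.
From mathcomp Require Import all_classical all_reals all_analysis.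
From mathcomp Require Import measurable_realfun.
Import Order.TTheory GRing.Theory Num.Theory.
Local Open Scope classical_set_scope.
Local Open Scope ring_scope.

Section core.
Context d (T : measurableType d) (R : realType) (P : probability T R) (g : T -> R).
Hypothesis mg : measurable_fun setT g.
Hypothesis ig : P.-integrable setT (EFin \o g).
Local Open Scope ereal_scope.

Let Pp := [set x | (0 < g x)%R].
Let Qp := [set x | (g x <= 0)%R].
Lemma mPp : measurable Pp.
Proof.
have := mg measurableT _ (measurable_itv `]0%R, +oo[).
rewrite setTI; congr measurable; apply/seteqP; split => x /=; rewrite in_itv /= ?andbT //.
Qed.
Lemma mQp : measurable Qp.
Proof.
have := mg measurableT _ (measurable_itv `]-oo, 0%R]).
rewrite setTI; congr measurable; apply/seteqP; split => x /=; rewrite in_itv /= //.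
Qed.

Lemma int_patch A : measurable A -> P.-integrable setT ((EFin \o g) \_ A).
Proof. move=> mA; apply/(integrable_mkcond _ mA). apply: (integrableS measurableT mA _ ig); exact: subsetT.
Qed.

Lemma core_up A : measurable A ->
  \int[P]_(x in A) (g x)%:E <= \int[P]_(x in Pp) (g x)%:E.
Proof.
move=> mA; rewrite [leLHS]integral_mkcond [leRHS]integral_mkcond.
apply: le_integral => //; [exact: int_patch|exact: int_patch mPp|].
move=> x _; rewrite !patchE.
case: ifPn => xA; case: ifPn => xP //.
- have xP' : ~ (0 < g x)%R by move: xP; rewrite notin_setE.
  rewrite /point /= lee_fin leNgt; exact/negP.
- by move: xP; rewrite in_setE /Pp /= => xP; rewrite /point/= lee_fin ltW.
Qed.

Lemma core_lo A : measurable A ->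
  \int[P]_(x in Qp) (g x)%:E <= \int[P]_(x in A) (g x)%:E.
Proof.
move=> mA; rewrite [leLHS]integral_mkcond [leRHS]integral_mkcond.
apply: le_integral => //; [exact: int_patch mQp|exact: int_patch|].
move=> x _; rewrite !patchE.
case: ifPn => xQ; case: ifPn => xA //.
- by move: xQ; rewrite in_setE /Qp /= => xQ; rewrite /point/= lee_fin.
- have xQ' : ~ (g x <= 0)%R by move: xQ; rewrite notin_setE.
  rewrite /point /= lee_fin leNgt; apply/negP => h; apply: xQ'; exact: ltW.
Qed.

Lemma core_L1 : \int[P]_x `|(g x)%:E| =
  \int[P]_(x in Pp) (g x)%:E - \int[P]_(x in Qp) (g x)%:E.
Proof.
rewrite [in RHS]integral_mkcond [X in _ - X]integral_mkcond.
rewrite -integralB//; [|exact: int_patch mPp|exact: int_patch mQp].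
apply: eq_integral => x _; rewrite !patchE /=.
case: ifPn => xP; case: ifPn => xQ.
- by move: xP xQ; rewrite !in_setE /Pp /Qp /= => a b; move: (lt_le_trans a b); rewrite ltxx.
- move: xP; rewrite in_setE /Pp /= => a; rewrite /point/= oppr0 adde0 gtr0_norm//.
- move: xQ; rewrite in_setE /Qp /= => a; rewrite /point/= add0e ler0_norm//.
- exfalso; move: xP xQ; rewrite !notin_setE /Pp /Qp /= => a b.
  by case: (leP (g x) 0%R).
Qed.
End core.

Section main.
Local Open Scope ereal_scope.

Lemma abs_le_L1 d (T : measurableType d) (R : realType) (P : probability T R)
  (h : T -> R) (A : set T) : measurable A -> P.-integrable setT (EFin \o h) ->
  `| \int[P]_(x in A) (h x)%:E | <= L1_norm P h.
Proof.
move=> mA ih; have mh := measurable_int _ ih.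
apply: (le_trans (le_abse_integral _ mA _)).
  exact: (measurable_funS measurableT (@subsetT _ _) mh).
rewrite /L1_norm; apply: ge0_subset_integral => //.
- exact: (measurableT_comp (@abse_measurable _ _) mh).
Qed.

Lemma wrt_meas d (T : measurableType d) (R : realType) (B : set (set T)) (g : T -> R) :
  B `<=` measurable -> measurable_wrt B g -> measurable_fun setT g.
Proof. by move=> Bm hg _ Y mY; rewrite setTI; apply: Bm; exact: hg. Qed.

Lemma wrt_P d (T : measurableType d) (R : realType) (B : set (set T)) (g : T -> R) :
  measurable_wrt B g -> B [set x | (0 < g x)%R] /\ B [set x | (g x <= 0)%R].
Proof.
move=> hg; split.
- have := hg _ (measurable_itv `]0%R, +oo[).
  congr B; apply/seteqP; split => x /=; rewrite in_itv /= ?andbT //.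
- have := hg _ (measurable_itv `]-oo, 0%R]).
  congr B; apply/seteqP; split => x /=; rewrite in_itv /= //.
Qed.

Lemma sup_ub d (T : measurableType d) (R : realType) (P : probability T R)
  (S : set (set T)) (f : T -> R) A : S A ->
  `| \int[P]_(x in A) (f x)%:E | <= S_norm P S f.
Proof. by move=> SA; apply: ereal_sup_ubound; exists A. Qed.

End main.

Arguments core_up {d T R P g} mg ig {A}.
Arguments core_lo {d T R P g} mg ig {A}.
Arguments core_L1 {d T R P g} mg ig.
Arguments abs_le_L1 {d T R P h A}.
Arguments wrt_meas {d T R B g}.
Arguments wrt_P {d T R B g}.
Arguments sup_ub {d T R} P {S} f {A}.

Theorem lemma2p5 (d : measure_display) (T : measurableType d) (R : realType)
  (P : probability T R) (k : nat) (S : set (set T)) (f : T -> R) :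
  (0 < k)%N -> k_semiring S k -> S `<=` measurable ->
  P.-integrable setT (EFin \o f) ->
  [/\ (S_norm P S f <= L1_norm P f)%E,
      (forall B : set (set T), sigma_algebra setT B -> B `<=` S ->
         forall g : T -> R, is_cond_exp P B f g ->
         (S_norm P S g <= S_norm P S f)%E) &
      (sigma_algebra setT S ->
         forall g : T -> R, is_cond_exp P S f g ->
         (S_norm P S f <= L1_norm P g)%E /\
         (L1_norm P g <= 2%:E * S_norm P S f)%E)].
Proof.
move=> _ _ Smeas intf; split.
- apply: ge_ereal_sup => y [A SA <-]; exact: abs_le_L1 (Smeas _ SA) intf.
- move=> B _ BS g [gB ig gint].
  have Bm : B `<=` measurable := fun A hA => Smeas _ (BS _ hA).
  have mg := wrt_meas Bm gB.
  have [BP BQ] := wrt_P gB.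
  apply: ge_ereal_sup => y [A SA <-].
  have mA := Smeas _ SA.
  have up := core_up mg ig mA; have lo := core_lo mg ig mA.
  rewrite (gint _ BP) in up; rewrite (gint _ BQ) in lo.
  case: (leP 0%E (\int[P]_(x in A) (g x)%:E))%E => h0.
  + rewrite gee0_abs //; apply: (le_trans up); apply: (le_trans (lee_abs _)).
    exact: sup_ub (BS _ BP).
  + rewrite lte0_abs //; apply: le_trans (sup_ub P f (BS _ BQ)).
    rewrite -abseN; apply: le_trans (lee_abs _); rewrite leeN2 //.
- move=> _ g [gS ig gint].
  have mg := wrt_meas Smeas gS.
  have [SP SQ] := wrt_P gS.
  split.
  + apply: ge_ereal_sup => y [A SA <-]; rewrite -(gint _ SA).
    exact: abs_le_L1 (Smeas _ SA) ig.
  + rewrite /L1_norm (core_L1 mg ig) (gint _ SP) (gint _ SQ).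
    apply: (le_trans (lee_abs _)); apply: (le_trans (lee_abs_sub _ _)).
    apply: (le_trans (leeD (sup_ub P f SP) (sup_ub P f SQ))).
    have s0 : (0 <= S_norm P S f)%E := le_trans (abse_ge0 _) (sup_ub P f SP).
    move: (S_norm P S f) s0 => s.
    case: s => [r||] //= r0.
    by rewrite -EFinD -EFinM lee_fin mulr_natl mulr2n.
by rewrite mulry gtr0_sg ?mul1e.

Qed.
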